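(* Consider the Galton–Watson process with types $\{1,2,\dots\}$ and progeny generating functions $P_i(\boldsymbol s)=\tfrac{19}{30}s_{i+1}^3+\tfrac{11}{30}$ for $i\ne10$ and $P_{10}(\boldsymbol s)=\tfrac25 s_{10}^4+\tfrac15 s_{11}^4+\tfrac25$. Then $\bar\nu=\lim_{k\to\infty}\mathrm{sp}(M^{(k)})=1.6>1$, and the partial extinction probabilities satisfy $\tilde q_i<1$ for $1\le i\le10$ and $\tilde q_i=1$ for $i\ge11$.
   Context: A Galton–Watson process with types $\{1,2,\dots\}$ is $\{\mathcal Z_n=(Z_{n1},Z_{n2},\dots)\}$, $Z_{n\ell}$ the number of type-$\ell$ individuals in generation $n$, started from one individual of type $\varphi_0$; $P_i(\boldsymbol s)$ is the probability generating function of the offspring vector of a type-$i$ individual, $M_{ij}=\partial P_i/\partial s_j|_{\boldsymbol s=\boldsymbol 1}$, $M^{(k)}=(M_{ij})_{1\le i,j\le k}$, and $\mathrm{sp}$ is the spectral radius. Partial extinction: $\tilde q_i=\mathbb P[\forall\ell:\lim_n Z_{n\ell}=0\mid\varphi_0=i]$. *)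

(* Defs.v *)
From HB Require Import structures.
From mathcomp Require Import all_boot all_order all_algebra.
From mathcomp Require Import all_classical all_reals all_analysis.
From mathcomp Require Import complex.
Set Implicit Arguments. Unset Strict Implicit. Unset Printing Implicit Defensive.
Import Order.TTheory GRing.Theory Num.Theory numFieldNormedType.Exports.
Local Open Scope classical_set_scope.
Local Open Scope ring_scope.

(* Offspring laws with finitely many outcomes.  Types are natural numbers    *)
(* (the paper's types are 1,2,...).  [off t] is the list of pairs            *)
(* (p, c): with probability p a type-t individual has the children whose     *)
(* types form the multiset c.  The progeny p.g.f. of type t is then          *)
(*   P_t(s) = \sum_(o <- off t) o.1 * \prod_(u <- o.2) s_u.                 *)
Definition offspring_law (R : realType) := nat -> seq (R * seq nat).

Definition pgf (R : realType) (off : offspring_law R) (t : nat) (s : nat -> R) : R :=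
  \sum_(o <- off t) o.1 * \prod_(u <- o.2) s u.

(* All joint outcomes (probability, multiset of children) of a population,
   given as the list of the types of its individuals, each individual
   reproducing independently. *)
Fixpoint outcomes (R : realType) (off : offspring_law R) (s : seq nat)
  : seq (R * seq nat) :=
  match s with
  | [::] => [:: (1, [::])]
  | t :: s' => [seq (o.1 * o'.1, o.2 ++ o'.2) | o <- off t, o' <- outcomes off s']
  end.

Definition gw_kernel (R : realType) (off : offspring_law R) (s s' : seq nat) : R :=
  \sum_(o <- outcomes off s | perm_eq o.2 s') o.1.

(* Z n w l = Z_{n l}(w): number of type-l individuals in generation n.
   [is_GW_from off i P Z]: Z is a Galton--Watson process with offspring
   laws [off], started from one individual of type i (phi_0 = i): every
   Z_{n l} is a random variable and the finite-dimensional distributions are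
   those of the Markov chain with the branching kernel. *)
Definition is_GW_from (R : realType) (off : offspring_law R) (i : nat)
  (d : measure_display) (T : measurableType d) (P : probability T R)
  (Z : nat -> T -> nat -> nat) : Prop :=
  (forall n l m, measurable [set w | Z n w l = m]) /\
  (forall (n : nat) (ss : nat -> seq nat),
     P [set w | forall k, (k <= n)%N -> forall l, Z k w l = count_mem l (ss k)]
     = ((perm_eq (ss 0%N) [:: i])%:R * \prod_(k < n) gw_kernel off (ss k) (ss k.+1))%:E).

(* Partial extinction: for every type l (l >= 1), lim_n Z_{n l} = 0
   (for a nat-valued sequence: eventually 0). *)
Definition partial_extinction (T : Type) (Z : nat -> T -> nat -> nat) : set T :=
  [set w | forall l, (0 < l)%N -> exists N, forall n, (N <= n)%N -> Z n w l = 0%N].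

(* Mean matrix M_{ij} = dP_i/ds_j (1) = expected number of type-j children. *)
Definition mean_entry (R : realType) (off : offspring_law R) (i j : nat) : R :=
  \sum_(o <- off i) o.1 * (count_mem j o.2)%:R.

(* M^(k) = (M_{ij})_{1 <= i,j <= k}  (index shift: row r : 'I_k is type r+1). *)
Definition trunc_mean (R : realType) (off : offspring_law R) (k : nat) : 'M[R]_k :=
  \matrix_(r < k, c < k) mean_entry off r.+1 c.+1.

(* Spectral radius of a real square matrix: the largest modulus of its
   complex eigenvalues (0 for the empty matrix). *)
Definition specrad (R : realType) (k : nat) (A : 'M[R]_k) : R :=
  sup [set ComplexField.Normc.normc lam | lam in
        [set lam : complex R |
          eigenvalue (map_mx (fun x : R => Complex x 0) A) lam]].

Definition ex_off (R : realType) : offspring_law R := fun t =>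
  if t == 10%N then [:: (2/5, nseq 4 10%N); (1/5, nseq 4 11%N); (2/5, [::])]
  else [:: (19/30, nseq 3 t.+1); (11/30, [::])].

(* Main.v *)
Require Import Defs.
From HB Require Import structures.
From mathcomp Require Import all_boot all_order all_algebra.
From mathcomp Require Import all_classical all_reals all_analysis.
Import Order.TTheory GRing.Theory Num.Theory numFieldNormedType.Exports.
Local Open Scope classical_set_scope.
Local Open Scope ring_scope.
Set Implicit Arguments. Unset Strict Implicit. Unset Printing Implicit Defensive.
From mathcomp Require Import ring lra.
From mathcomp Require Import complex.
Section Comb.
Variable R : realType.
Variable off : offspring_law R.

Definition canon (s : seq nat) := sort leq s.
Definition children (s : seq nat) := undup [seq canon o.2 | o <- outcomes off s].

Fixpoint paths (M : nat) (s : seq nat) : seq (seq (seq nat)) :=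
  if M is M'.+1 then [seq s :: q | s' <- children s, q <- paths M' s'] else [:: [:: s]].

Fixpoint wt (p : seq (seq nat)) : R :=
  if p is s :: q then (if q is s' :: _ then gw_kernel off s s' * wt q else 1) else 1.

Fixpoint phi (y : nat -> R) (M : nat) : nat -> R :=
  if M is M'.+1 then fun t => pgf off t (phi y M') else y.

Lemma outcomes_prod (f : nat -> R) s :
  \sum_(o <- outcomes off s) o.1 * \prod_(u <- o.2) f u = \prod_(t <- s) pgf off t f.
Proof.
elim: s => [|t s IH] /=; first by rewrite big_seq1 !big_nil mulr1.
rewrite big_allpairs_dep big_cons /pgf -IH big_distrl /=.
apply: eq_bigr => o _; rewrite big_distrr /=; apply: eq_bigr => o' _.
by rewrite big_cat /= mulrACA.
Qed.

Lemma canon_sorted s : sorted leq (canon s).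
Proof. apply: sort_sorted; exact: leq_total. Qed.

Lemma canonK s : canon (canon s) = canon s.
Proof. apply: sorted_sort; [exact: leq_trans | exact: canon_sorted]. Qed.

Lemma perm_canon a b : perm_eq a (canon b) = (canon b == canon a).
Proof.
apply/idP/idP.
  move/(perm_sortP leq_total leq_trans anti_leq).
  by rewrite -/(canon a) -/(canon (canon b)) canonK => ->.
move/eqP=> H; apply/(perm_sortP leq_total leq_trans anti_leq).
by rewrite -/(canon a) -/(canon (canon b)) canonK.
Qed.

Lemma regroup (G : seq nat -> R) s :
  (forall a b, perm_eq a b -> G a = G b) ->
  \sum_(s' <- children s) gw_kernel off s s' * G s' =
  \sum_(o <- outcomes off s) o.1 * G o.2.
Proof.
move=> HG; rewrite /gw_kernel /children.
transitivity (\sum_(s' <- undup [seq canon o.2 | o <- outcomes off s])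
   \sum_(o <- outcomes off s) (if perm_eq o.2 s' then o.1 * G o.2 else 0)).
  apply: eq_bigr => s' _; rewrite big_distrl /= big_mkcond /=.
  by apply: eq_bigr => o _; case: ifP => // /HG ->.
rewrite exchange_big /=; apply: eq_big_seq => o Ho.
rewrite -big_mkcond /=.
have Hin : canon o.2 \in undup [seq canon o.2 | o <- outcomes off s].
  by rewrite mem_undup; apply: (map_f (fun o : R * seq nat => canon o.2)).
rewrite -big_filter.
have -> : [seq s' <- undup [seq canon o0.2 | o0 <- outcomes off s] | perm_eq o.2 s'] = [:: canon o.2].
  rewrite (@eq_in_filter _ _ (pred1 (canon o.2))); last first.
    move=> s'; rewrite mem_undup; case/mapP => o' _ ->.
    by rewrite /= perm_canon.
  by apply: filter_pred1_uniq => //; exact: undup_uniq.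
by rewrite big_seq1.
Qed.

Lemma paths_shape M s p : p \in paths M s -> exists q, p = s :: q /\ size q = M.
Proof.
elim: M s p => [|M IH] s p /=; first by rewrite inE => /eqP ->; exists [::].
case/allpairsPdep => s' [q [_ Hq ->]]; exists q; split => //.
by have [q' [-> <-]] := IH _ _ Hq.
Qed.

Lemma paths_sum y M s :
  \sum_(p <- paths M s) wt p * \prod_(u <- last [::] p) y u = \prod_(t <- s) phi y M t.
Proof.
elim: M s => [|M IH] s /=; first by rewrite big_seq1 /= mul1r.
rewrite big_allpairs_dep /= -outcomes_prod -(regroup (G := fun x => \prod_(u <- x) phi y M u)); last first.
  by move=> a b Hab; apply: perm_big.
apply: eq_bigr => s' _.
rewrite -IH big_distrr /= big_seq [RHS]big_seq.
apply: eq_bigr => q Hq.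
have [q' [-> _]] := paths_shape Hq.
by rewrite /= mulrA.
Qed.

Lemma paths_sorted M s p : sorted leq s -> p \in paths M s -> all (sorted leq) p.
Proof.
elim: M s p => [|M IH] s p Hs /=; first by rewrite inE => /eqP -> /=; rewrite Hs.
case/allpairsPdep => s' [q [Hs' Hq ->]] /=; rewrite Hs /=.
apply: IH Hq.
by move: Hs'; rewrite mem_undup; case/mapP => o _ ->; apply: canon_sorted.
Qed.

Lemma paths_uniq M s : uniq (paths M s).
Proof.
elim: M s => [|M IH] s //=.
apply: allpairs_uniq_dep; first exact: undup_uniq.
  by move=> x _; apply: IH.
move=> [a qa] [b qb] /allpairsPdep [a' [qa' [_ Ha ea]]] /allpairsPdep [b' [qb' [_ Hb eb]]].
case: ea => ea1 ea2; subst a qa.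
case: eb => eb1 eb2; subst b qb.
rewrite /= => -[eq].
have [q1 [e1 _]] := paths_shape Ha.
have [q2 [e2 _]] := paths_shape Hb.
move: eq; rewrite e1 e2 => -[<- <-]; by [].
Qed.

Lemma wt_prod p : wt p = \prod_(k < (size p).-1) gw_kernel off (nth [::] p k) (nth [::] p k.+1).
Proof.
elim: p => [|s q IH] /=; first by rewrite big_ord0.
case: q IH => [|s' q] IH /=; first by rewrite big_ord0.
rewrite big_ord_recl /= -IH /=.
by congr (_ * _); apply: eq_bigr => i _; rewrite add0n.
Qed.
End Comb.
Section Meas.
Variable R : realType.
Variable off : offspring_law R.
Variables (d : measure_display) (T : measurableType d) (P : probability T R).
Variables (i : nat) (Z : nat -> T -> nat -> nat).
Hypothesis HZ : is_GW_from off i P Z.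
Hypothesis Hone : forall M, \sum_(p <- paths off M [:: i]) wt off p = 1.

Definition cyl M (p : seq (seq nat)) : set T :=
  [set w | forall k, (k <= M)%N -> forall l, Z k w l = count_mem l (nth [::] p k)].

Lemma in_bigsetU (F : seq (seq nat) -> set T) (l : seq (seq (seq nat))) (Q : pred (seq (seq nat))) w :
  (\big[setU/set0]_(p <- l | Q p) F p) w <-> exists p, [/\ p \in l, Q p & F p w].
Proof.
elim: l => [|a l IH]; first by rewrite big_nil; split => // -[p []].
rewrite big_cons; case: ifP => Qa.
  split.
    case => [Fa|/IH [p [pl Qp Fp]]]; first by exists a; rewrite inE eqxx.
    by exists p; rewrite inE pl orbT.
  case=> p []; rewrite inE => /orP [/eqP ->|pl] Qp Fp; first by left.
  by right; apply/IH; exists p.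
split; first by move/IH => [p [pl Qp Fp]]; exists p; rewrite inE pl orbT.
case=> p []; rewrite inE => /orP [/eqP ->|pl] Qp Fp; first by rewrite Qa in Qp.
by apply/IH; exists p.
Qed.

Lemma cyl_meas M p : measurable (cyl M p).
Proof.
have -> : cyl M p = \bigcap_k \bigcap_l (if (k <= M)%N then [set w | Z k w l = count_mem l (nth [::] p k)] else setT).
  apply/seteqP; split => w /=.
    by move=> H k _ l _; case: ifP => // /H; apply.
  by move=> H k kM l; have := H k I l I; rewrite kM.
apply: bigcapT_measurable => k; apply: bigcapT_measurable => l.
by case: ifP => _ //; exact: (HZ.1 k l).
Qed.

Lemma cyl_prob M p : p \in paths off M [:: i] -> P (cyl M p) = (wt off p)%:E.
Proof.
move=> Hp; have [q [ep sq]] := paths_shape Hp.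
have h0 : nth [::] p 0 = [:: i] by rewrite ep.
have hs : (size p).-1 = M by rewrite ep /= sq.
by rewrite /cyl (HZ.2 M (fun k => nth [::] p k)) h0 perm_refl mul1r wt_prod hs.
Qed.

Lemma cyl_disj M p q : p \in paths off M [:: i] -> q \in paths off M [:: i] -> p != q ->
  cyl M p `&` cyl M q = set0.
Proof.
move=> Hp Hq pq.
have [p' [ep sp]] := paths_shape Hp.
have [q' [eq sq]] := paths_shape Hq.
have sortp := paths_sorted (isT : sorted leq [:: i]) Hp.
have sortq := paths_sorted (isT : sorted leq [:: i]) Hq.
have [k kM nk] : exists2 k, (k <= M)%N & nth [::] p k != nth [::] q k.
  case: (boolP [exists k : 'I_M.+1, nth [::] p k != nth [::] q k]) => [/existsP [k nk] | /existsPn H].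
    by exists k => //; rewrite -ltnS ltn_ord.
  case/negP: pq; apply/eqP; apply: (@eq_from_nth _ [::]); first by rewrite ep eq /= sp sq.
  move=> k; rewrite ep /= sp ltnS => kM.
  by have := H (Ordinal (kM : (k < M.+1)%N)); rewrite negbK ep => /eqP.
apply/seteqP; split => // w [Hw1 Hw2].
move: nk; suff -> : nth [::] p k = nth [::] q k by rewrite eqxx.
have Hpk : sorted leq (nth [::] p k) by apply: (all_nthP [::] sortp); rewrite ep /= sp ltnS.
have Hqk : sorted leq (nth [::] q k) by apply: (all_nthP [::] sortq); rewrite eq /= sq ltnS.
apply: (sorted_eq leq_trans anti_leq) => //.
apply/allP => l _; apply/eqP.
by rewrite -(Hw1 k kM l) -(Hw2 k kM l).
Qed.


Lemma measure_big_disj M (l : seq (seq (seq nat))) :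
  uniq l -> {subset l <= paths off M [:: i]} ->
  P (\big[setU/set0]_(p <- l) cyl M p) = \sum_(p <- l) P (cyl M p).
Proof.
elim: l => [|a l IH] /=; first by rewrite !big_nil measure0.
move=> /andP [al ul] sub.
rewrite !big_cons measureU; first last.
- apply/seteqP; split => // w [Ha /in_bigsetU [p [pl _ Hp]]].
  have : a != p by apply: contraNneq al => ->.
  move/(cyl_disj (sub a (mem_head _ _)) (sub p _)).
  rewrite inE pl orbT => /(_ isT) => e.
  by have : (cyl M a `&` cyl M p) w by []; rewrite e.
- by apply: bigsetU_measurable => p _; exact: cyl_meas.
- exact: cyl_meas.
by congr (_ + _)%E; apply: IH => // p pl; apply: sub; rewrite inE pl orbT.
Qed.

Lemma U_prob M : P (\big[setU/set0]_(p <- paths off M [:: i]) cyl M p) = 1%E.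
Proof.
rewrite (measure_big_disj (paths_uniq _ _ _)) // big_seq.
rewrite (eq_bigr (fun p => (wt off p)%:E)); last by move=> p Hp; exact: cyl_prob.
by rewrite -big_seq sumEFin Hone.
Qed.

Lemma measure_big_le M (l : seq (seq (seq nat))) (Q : pred (seq (seq nat))) :
  (P (\big[setU/set0]_(p <- l | Q p) cyl M p) <= \sum_(p <- l | Q p) P (cyl M p))%E.
Proof.
elim: l => [|a l IH] /=; first by rewrite !big_nil measure0.
rewrite !big_cons; case: ifP => _ //.
apply: le_trans (measureU2 _ (cyl_meas _ _) _) _.
  by apply: bigsetU_measurable => p _; exact: cyl_meas.
by apply: leeD.
Qed.

Lemma event_bound M (E : set T) (Q : pred (seq (seq nat))) :
  measurable E ->
  (forall p, p \in paths off M [:: i] -> ~~ Q p -> cyl M p `&` E = set0) ->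
  (P E <= (\sum_(p <- paths off M [:: i] | Q p) wt off p)%:E)%E.
Proof.
move=> mE HE.
set U := \big[setU/set0]_(p <- paths off M [:: i]) cyl M p.
set V := \big[setU/set0]_(p <- paths off M [:: i] | Q p) cyl M p.
have mU : measurable U by apply: bigsetU_measurable => p _; exact: cyl_meas.
have mV : measurable V by apply: bigsetU_measurable => p _; exact: cyl_meas.
have sub : E `<=` V `|` ~` U.
  move=> w Ew; case: (pselect (U w)) => [/in_bigsetU [p [pl _ Hp]]|nU]; last by right.
  left; apply/in_bigsetU; exists p; split => //.
  apply/negPn/negP => nQ.
  have := HE p pl nQ => e.
  by have : (cyl M p `&` E) w by []; rewrite e.
have H1 : (P E <= P (V `|` ~` U))%E.
  apply: le_measure sub.
  - by rewrite inE.
  - by rewrite inE; apply: measurableU => //; exact: measurableC.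
have H2 : (P (V `|` ~` U) <= P V + P (~` U))%E.
  exact: (measureU2 _ mV (measurableC mU)).
have H3 : P (~` U) = 0%E.
  by rewrite (probability_setC P mU) /U U_prob subee.
have H4 : (P V <= (\sum_(p <- paths off M [:: i] | Q p) wt off p)%:E)%E.
  apply: le_trans (measure_big_le _ _ _) _.
  rewrite big_seq_cond (eq_bigr (fun p => (wt off p)%:E)); last first.
    by move=> p /andP [Hp _]; exact: cyl_prob.
  by rewrite -big_seq_cond sumEFin.
rewrite H3 adde0 in H2.
exact: le_trans H1 (le_trans H2 H4).
Qed.
End Meas.
Section Ex.
Variable R : realType.
Local Notation off := (ex_off R).

Lemma pgf_ex t (f : nat -> R) : pgf off t f =
  if t == 10%N then 2/5 * f 10%N ^+ 4 + 1/5 * f 11%N ^+ 4 + 2/5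
  else 19/30 * f t.+1 ^+ 3 + 11/30.
Proof.
rewrite /pgf /ex_off; case: ifP => _; rewrite !big_cons !big_nil /=; ring.
Qed.

Lemma phi_one M t : phi off (fun _ => 1) M t = 1.
Proof.
elim: M t => //= M IH t; rewrite pgf_ex !IH !expr1n; case: ifP => _; lra.
Qed.

Lemma Hone_ex i M : \sum_(p <- paths off M [:: i]) wt off p = 1.
Proof.
have := paths_sum off (fun _ => 1) M [:: i]; rewrite big_seq1 phi_one => <-.
by apply: eq_bigr => p _; rewrite big1 ?mulr1.
Qed.

Lemma prod_neq (l : nat) s : \prod_(u <- s) ((u != l)%:R : R) = (count_mem l s == 0)%:R.
Proof.
elim: s => [|u s IH]; first by rewrite big_nil.
rewrite big_cons IH /=.
by case: (u == l) => /=; [rewrite mul0r | rewrite mul1r add0n].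
Qed.

Lemma sum_zero_count M i l :
  \sum_(p <- paths off M [:: i] | count_mem l (last [::] p) == 0%N) wt off p
  = phi off (fun u => (u != l)%:R) M i.
Proof.
rewrite big_mkcond; have := paths_sum off (fun u => (u != l)%:R) M [:: i].
rewrite big_seq1 => <-; apply: eq_bigr => p _; rewrite prod_neq.
by case: ifP => _; rewrite ?mulr1 ?mulr0.
Qed.

Lemma pow01 (x : R) n : 0 <= x <= 1 -> 0 <= x ^+ n <= 1.
Proof. by case/andP => h1 h2; rewrite exprn_ge0 ?exprn_ile1. Qed.

Lemma phi_01 y M t : (forall u, 0 <= y u <= 1) -> 0 <= phi off y M t <= 1.
Proof.
move=> Hy; elim: M t => //= M IH t; rewrite pgf_ex.
have := pow01 4 (IH 10%N); have := pow01 4 (IH 11%N); have := pow01 3 (IH t.+1).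
move=> /andP [? ?] /andP [? ?] /andP [? ?].
by case: ifP => _; apply/andP; split; lra.
Qed.

Definition y10 (u : nat) : R := (u != 10%N)%:R.

Lemma y10_01 u : 0 <= y10 u <= 1.
Proof. by rewrite /y10; case: (u != 10%N) => /=; rewrite ?lexx ?ler01. Qed.

Lemma pow45 (x : R) n : 0 <= x <= 4/5 -> x ^+ n <= (4/5) ^+ n.
Proof.
case/andP => h1 h2; apply: lerXn2r => //; rewrite qualifE //=; lra.
Qed.

Lemma phi10 M : phi off y10 M 10%N <= 4/5.
Proof.
elim: M => [|M IH] /=; first by rewrite /y10 /=; lra.
rewrite pgf_ex /=.
have h := phi_01 M 10%N y10_01.
have h' := phi_01 M 11%N y10_01.
have := pow45 4 (_ : 0 <= phi off y10 M 10%N <= 4/5).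
have e : (4/5 : R) ^+ 4 = 256/625 by rewrite !exprS expr0; field.
rewrite e => H4.
have {H4} H4 := H4 ltac:(case/andP: h => ? ?; apply/andP; split => //).
have := pow01 4 h'; case/andP => ? ?.
have := pow01 4 h; case/andP => ? ?.
lra.
Qed.

Lemma phi_le k M : (k <= 10)%N -> phi off y10 (M + k) (10 - k) <= 4/5.
Proof.
elim: k => [|k IH] hk; first by rewrite addn0 subn0; exact: phi10.
rewrite addnS /= pgf_ex.
have -> : (10 - k.+1 == 10)%N = false by apply/negbTE; rewrite neq_ltn; apply/orP; left; rewrite ltn_subrL.
have -> : (10 - k.+1).+1 = (10 - k)%N by rewrite subnS prednK // subn_gt0.
have H := IH (ltnW hk).
have h := phi_01 (M + k) (10 - k) y10_01.
have := pow45 3 (_ : 0 <= phi off y10 (M + k) (10 - k) <= 4/5).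
have e : (4/5 : R) ^+ 3 = 64/125 by rewrite !exprS expr0; field.
rewrite e => H3.
have {H3} H3 := H3 ltac:(case/andP: h => ? ?; apply/andP; split => //).
have := pow01 3 h; case/andP => ? ?.
lra.
Qed.

Lemma phi_ge11 l n t : (11 <= t)%N -> (t + n != l)%N -> phi off (fun u => (u != l)%:R) n t = 1.
Proof.
elim: n t => [|n IH] t ht htl /=; first by rewrite addn0 in htl; rewrite htl.
rewrite pgf_ex.
have -> : (t == 10)%N = false by apply/negbTE; rewrite neq_ltn; apply/orP; right; apply: leq_trans ht.
rewrite IH //; last by rewrite addSnnS.
  by rewrite expr1n; lra.
by apply: leq_trans ht _.
Qed.
End Ex.
Section Main.
Variable R : realType.
Variables (d : measure_display) (T : measurableType d) (P : probability T R).
Variables (i : nat) (Z : nat -> T -> nat -> nat).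
Hypothesis HZ : is_GW_from (ex_off R) i P Z.

Lemma pe_meas : measurable (partial_extinction Z).
Proof.
have -> : partial_extinction Z = \bigcap_l (if (0 < l)%N then
    \bigcup_N \bigcap_n (if (N <= n)%N then [set w | Z n w l = 0%N] else setT) else setT).
  apply/seteqP; split => w /=.
    move=> H l _; case: ifP => // lp; have [N HN] := H l lp.
    by exists N => // n _; case: ifP => // /HN.
  move=> H l lp; have := H l I; rewrite lp => -[N _ HN]; exists N => n Nn.
  by have := HN n I; rewrite Nn.
apply: bigcapT_measurable => l; case: ifP => _ //.
apply: bigcupT_measurable => N; apply: bigcapT_measurable => n; case: ifP => _ //.
exact: (HZ.1 n l 0%N).
Qed.

Lemma null_bigcup (F : nat -> set T) : (forall k, measurable (F k)) ->
  (forall k, P (F k) = 0%E) -> P (\bigcup_k F k) = 0%E.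
Proof.
move=> mF hF; apply/eqP; rewrite eq_le measure_ge0 andbT.
apply: le_trans (measure_sigma_subadditive P mF (bigcupT_measurable _ mF) (@subset_refl _ _)) _.
by rewrite eseries0 // => k _ _; exact: hF.
Qed.

Lemma mneq n l : measurable [set w | Z n w l <> 0%N].
Proof.
have -> : [set w | Z n w l <> 0%N] = ~` [set w | Z n w l = 0%N] by apply/seteqP; split.
exact: measurableC (HZ.1 n l 0%N).
Qed.

Lemma nth_lastp M p : p \in paths (ex_off R) M [:: i] -> nth [::] p M = last [::] p.
Proof. by move=> Hp; have [q [ep sq]] := paths_shape Hp; rewrite -nth_last ep /= sq. Qed.

Lemma bad_null n l : (11 <= i)%N -> (l != i + n)%N -> P [set w | Z n w l <> 0%N] = 0%E.
Proof.
move=> hi hl.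
apply/eqP; rewrite eq_le measure_ge0 andbT.
apply: le_trans (event_bound HZ (Hone_ex R i) (M := n) (Q := fun p => count_mem l (last [::] p) != 0%N) (mneq n l) _) _.
  move=> p Hp; rewrite negbK => /eqP H0.
  apply/seteqP; split => // w [Hc Hw]; apply: Hw.
  by rewrite (Hc n (leqnn n) l) (nth_lastp Hp).
rewrite lee_fin.
have := Hone_ex R i n.
rewrite (bigID (fun p : seq (seq nat) => count_mem l (last [::] p) == 0%N)) /=.
rewrite sum_zero_count phi_ge11 //; last by rewrite eq_sym.
move/(congr1 (fun x => x - 1)); rewrite addrC addrK subrr => ->.
exact: lexx.
Qed.

Lemma part_ge11 : (11 <= i)%N -> P (partial_extinction Z) = 1%E.
Proof.
move=> hi.
set F := fun l => \bigcup_n (if (l != i + n)%N then [set w | Z n w l <> 0%N] else set0).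
have mF : forall l, measurable (F l).
  move=> l; apply: bigcupT_measurable => n; case: ifP => _ //; exact: mneq.
have HF : P (\bigcup_l F l) = 0%E.
  apply: null_bigcup => // l; apply: null_bigcup => [n|n]; case: ifP => h /=.
  all: try first [exact: mneq | exact: measurable0 | exact: measure0 | exact: bad_null].
have sub : ~` partial_extinction Z `<=` \bigcup_l F l.
  move=> w npe; apply: contrapT => nU; apply: npe => l lp; exists l.+1 => n ln.
  apply: contrapT => nz; apply: nU; exists l => //; exists n => //.
  have -> : (l != i + n)%N.
    by rewrite neq_ltn; apply/orP; left; apply: leq_trans ln _; rewrite leq_addl.
  exact: nz.
have H0 : P (~` partial_extinction Z) = 0%E.
  apply/eqP; rewrite eq_le measure_ge0 andbT -HF.
  apply: le_measure sub; rewrite inE; last exact: bigcupT_measurable.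
  exact: measurableC pe_meas.
rewrite -(setCK (partial_extinction Z)) probability_setC; last exact: measurableC pe_meas.
by rewrite H0 sube0.
Qed.

Lemma part_le10 : (0 < i)%N -> (i <= 10)%N -> (P (partial_extinction Z) < 1)%E.
Proof.
move=> i0 i10.
set H := fun N => [set w | forall n, (N <= n)%N -> Z n w 10%N = 0%N].
have mH : forall N, measurable (H N).
  move=> N; have -> : H N = \bigcap_n (if (N <= n)%N then [set w | Z n w 10%N = 0%N] else setT).
    apply/seteqP; split => w /=.
      by move=> Hw n _; case: ifP => // /Hw.
    by move=> Hw n Nn; have := Hw n I; rewrite Nn.
  apply: bigcapT_measurable => n; case: ifP => _ //; exact: (HZ.1 n 10%N 0%N).
have sub : partial_extinction Z `<=` \bigcup_N H N.
  by move=> w pe; have [N HN] := pe 10%N isT; exists N.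
have hom : {homo H : n m / (n <= m)%N >-> (n <= m)%O}.
  by move=> n m nm; apply/subsetPset => w Hw k mk; apply: Hw; apply: leq_trans mk.
have cv := nondecreasing_cvg_mu (mu := P) mH (bigcupT_measurable _ mH) hom.
have bnd : forall N, (P (H N) <= (4/5 : R)%:E)%E.
  move=> N.
  have mE := HZ.1 (N + 10) 10%N 0%N.
  apply: le_trans (le_measure _ _ _ (_ : H N `<=` [set w | Z (N + 10) w 10%N = 0%N])) _.
  - by rewrite inE.
  - by rewrite inE.
  - by move=> w Hw; apply: Hw; rewrite leq_addr.
  apply: le_trans (event_bound HZ (Hone_ex R i) (M := N + 10) (Q := fun p => count_mem 10%N (last [::] p) == 0%N) mE _) _.
    move=> p Hp H0.
    apply/seteqP; split => // w [Hc Hw]; move: H0; apply/negP/negPn/eqP.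
    by rewrite -(nth_lastp Hp) -(Hc _ (leqnn _) 10%N).
  rewrite lee_fin sum_zero_count.
  have := phi_le R (N + i) (k := (10 - i)%N) (leq_subr _ _).
  by rewrite -addnA subnKC // subKn // addnC.
have lim_le : (P (\bigcup_N H N) <= (4/5 : R)%:E)%E.
  rewrite -(cvg_lim (@ereal_hausdorff R) cv); apply: lime_le; first by apply/cvg_ex; eexists; exact: cv.
  by apply: nearW => N; exact: bnd.
apply: le_lt_trans (le_measure _ _ _ sub) _.
- by rewrite inE; exact: pe_meas.
- by rewrite inE; exact: bigcupT_measurable.
apply: le_lt_trans lim_le _; rewrite lte_fin; lra.
Qed.
End Main.
Lemma char_poly_tr (F : comNzRingType) n (B : 'M[F]_n) : char_poly B^T = char_poly B.
Proof.
rewrite /char_poly -[RHS]det_tr; congr (\det _).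
by rewrite /char_poly_mx linearB /= tr_scalar_mx map_trmx.
Qed.

Lemma char_poly_utrig (F : comNzRingType) n (B : 'M[F]_n) :
  (forall a b : 'I_n, (b < a)%N -> B a b = 0) ->
  char_poly B = \prod_(j < n) ('X - (B j j)%:P).
Proof.
move=> HB; rewrite -char_poly_tr char_poly_trig; last first.
  by apply/is_trig_mxP => a b ab; rewrite mxE HB.
by apply: eq_bigr => j _; rewrite mxE.
Qed.

Section Spec.
Variable R : realType.
Local Notation off := (ex_off R).

Lemma mean_lt a b : (b < a)%N -> mean_entry off a b = 0.
Proof.
move=> ba; rewrite /mean_entry /ex_off; case: ifP => /eqP ea;
  rewrite !big_cons big_nil !count_nseq /=.
  subst a.
  have -> : (10 == b)%N = false by apply/negbTE; rewrite neq_ltn ba orbT.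
  have -> : (11 == b)%N = false by apply/negbTE; rewrite neq_ltn (ltn_trans ba) ?orbT.
  by rewrite !mul0n !mulr0 !addr0.
have -> : (a.+1 == b)%N = false by apply/negbTE; rewrite neq_ltn (ltn_trans ba) ?orbT.
by rewrite !mul0n !mulr0 !addr0.
Qed.

Lemma mean_diag a : mean_entry off a a = if a == 10%N then 8/5 else 0.
Proof.
rewrite /mean_entry /ex_off; case: ifP => /eqP ea;
  rewrite !big_cons big_nil !count_nseq /=.
  by subst a; rewrite /=; lra.
have -> : (a.+1 == a)%N = false by apply/negbTE; rewrite neq_ltn ltnSn orbT.
by rewrite !mul0n !mulr0 !addr0.
Qed.

Definition cpx (x : R) : complex.complex R := complex.Complex x 0.

Lemma eig_ex k (lam : complex.complex R) : (10 <= k)%N ->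
  eigenvalue (map_mx cpx (trunc_mean off k)) lam <-> (lam = 0 \/ lam = cpx (8/5)).
Proof.
move=> hk.
rewrite eigenvalue_root_char char_poly_utrig; last first.
  by move=> a b ba; rewrite !mxE mean_lt.
rewrite /root horner_prod.
split.
  move/prodf_eq0 => [j _]; rewrite hornerXsubC subr_eq0 !mxE mean_diag => /eqP ->.
  by case: ifP => _; [right | left].
have j9 : (9 < k)%N by [].
have j0 : (0 < k)%N by apply: leq_trans hk.
case=> ->; apply/prodf_eq0.
  exists (Ordinal j0) => //; rewrite hornerXsubC subr_eq0 !mxE mean_diag /=; done.
exists (Ordinal j9) => //; rewrite hornerXsubC subr_eq0 !mxE mean_diag /=; done.
Qed.

Lemma specrad_ex k : (10 <= k)%N -> specrad (trunc_mean off k) = 8/5.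
Proof.
move=> hk; rewrite /specrad.
set S := [set _ | _ in _].
have hS : forall x, S x <-> (x = 0 \/ x = 8/5).
  move=> x; split.
    case=> lam /(eig_ex _ hk) [->|->] <-.
      by left; rewrite /= expr0n /= addr0 sqrtr0.
    by right; rewrite /= expr0n /= addr0 sqrtr_sqr ger0_norm //; lra.
  case=> ->.
    exists 0; last by rewrite /= expr0n /= addr0 sqrtr0.
    by apply/(eig_ex _ hk); left.
  exists (cpx (8/5)); first by apply/(eig_ex _ hk); right.
  by rewrite /= expr0n /= addr0 sqrtr_sqr ger0_norm //; lra.
have ub : ubound S (8/5).
  by move=> x /hS [->|->]; lra.
apply/eqP; rewrite eq_le; apply/andP; split.
  by apply: ge_sup => //; exists (8/5); apply/hS; right.
by apply: (ub_le_sup (ex_intro _ _ ub)); apply/hS; right.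
Qed.
End Spec.

Theorem mainTheorem12 (R : realType) :
  ((fun k : nat => specrad (trunc_mean (ex_off R) k)) @ \oo --> (8 / 5 : R))
  /\ (1 < 8 / 5 :> R)
  /\ (forall (d : measure_display) (T : measurableType d) (P : probability T R)
        (i : nat) (Z : nat -> T -> nat -> nat),
        (0 < i)%N -> is_GW_from (ex_off R) i P Z ->
        ((i <= 10)%N -> (P (partial_extinction Z) < 1)%E) /\
        ((11 <= i)%N -> P (partial_extinction Z) = 1%E)).
Proof.
split.
  apply: cvg_near_cst; exists 10%N => // k /= hk; exact: specrad_ex.
split; first lra.
move=> d T P i Z i0 HZ; split => hi.
  exact: (part_le10 HZ).
exact: (part_ge11 HZ).
Qed.
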